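(* Let $p,q$ be odd primes with $q-p=2$, let $K=\mathbb{Q}(\sqrt{D})$ with $D\in\{-11,-19,-43,-67,-163\}$, and assume $p$ and $q$ are both inert in $K$. Let $\varepsilon\in\{1,-1\}$, $E=E_\varepsilon: y^2=x(x+\varepsilon p)(x+\varepsilon q)$, $E'=E'_\varepsilon: y^2=x^3-2\varepsilon(p+q)x^2+4x$. Then: (1) if $d\in K(S,2)$ satisfies one of (a) $p\mid d$, (b) $q\mid d$, (c) $d=-1$, then $d\notin S^{(\varphi)}(E/K)$; (2) (a) $2\in S^{(\varphi)}(E/K)$ iff $p\equiv 3\pmod 4$; (b) $-2\in S^{(\varphi)}(E/K)$ iff $p\equiv 1\pmod 4$; (1$'$) if $d\in K(S,2)$ satisfies $2\mid d$, then $d\notin S^{(\widehat\varphi)}(E'/K)$; (2$'$) $-1,p,q\in S^{(\widehat\varphi)}(E'/K)$.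
   Context: $\varphi:E\to E'$, $(x,y)\mapsto(y^2/x^2,y(pq-x^2)/x^2)$, and its dual $\widehat\varphi:E'\to E$, $(x,y)\mapsto(y^2/(4x^2),y(4-x^2)/(8x^2))$. Here $2$ is inert in $K$. Let $S=\{\infty\}\cup\{$primes of $K$ dividing $2pq\}$ and $K(S,2)=\{d\in K^*/K^{*2}:\ \mathrm{ord}_v(d)$ even for all $v\notin S\}=\langle -1,2,p,q\rangle$. The Selmer groups are identified with $S^{(\varphi)}(E/K)=\{d\in K(S,2): C_d(K_v)\neq\emptyset\ \forall v\in S\}$ and $S^{(\widehat\varphi)}(E'/K)=\{d\in K(S,2): C'_d(K_v)\neq\emptyset\ \forall v\in S\}$, where $C_d: dw^2=d^2-2\varepsilon(p+q)dz^2+4z^4$ and $C'_d: dw^2=d^2+\varepsilon(p+q)dz^2+pqz^4$. ''$\pi\mid d$'' means $\mathrm{ord}_\pi(d)$ is odd. *)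

(* Defs.v *)
From HB Require Import structures.
From mathcomp Require Import all_boot all_order all_algebra all_field.
Set Implicit Arguments. Unset Strict Implicit. Unset Printing Implicit Defensive.
Import Order.TTheory GRing.Theory Num.Theory.
Local Open Scope ring_scope.

(* K = Q(sqrt D), D = 1 mod 4, O_K = Z[w], w = (1 + sqrt D)/2, w^2 = w + m,
   m = (D - 1)/4.  An element a + b w of O_K is the pair (a, b). *)
Definition omega_m (D : int) : int := divz (D - 1) 4.

Definition okt := (int * int)%type.
Definition ok_const (c : int) : okt := (c, 0).
Definition ok_add (x y : okt) : okt := (x.1 + y.1, x.2 + y.2).
Definition ok_sub (x y : okt) : okt := (x.1 - y.1, x.2 - y.2).
Definition ok_mul (m : int) (x y : okt) : okt :=
  (x.1 * y.1 + m * x.2 * y.2, x.1 * y.2 + x.2 * y.1 + x.2 * y.2).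
Definition ok_cong (l : int) (n : nat) (x y : okt) : Prop :=
  (l ^+ n %| x.1 - y.1)%Z /\ (l ^+ n %| x.2 - y.2)%Z.

(* A rational prime l is inert in K: the minimal polynomial X^2 - X - m of w
   is irreducible (has no root) modulo l (Dedekind-Kummer). *)
Definition inert (D l : int) : Prop :=
  forall x : int, ~ (l %| x ^+ 2 - x - omega_m D)%Z.

Definition quart_res (m d A B X : int) (Z W : okt) : okt :=
  let Z2 := ok_mul m Z Z in
  ok_sub (ok_mul m (ok_const d) (ok_mul m W W))
    (ok_add (ok_const (d ^+ 2 * X ^+ 4))
       (ok_add (ok_mul m (ok_const (A * d * X ^+ 2)) Z2)
               (ok_mul m (ok_const B) (ok_mul m Z2 Z2)))).

(* The curve  d w^2 = d^2 + A d z^2 + B z^4  has a point over K_v, where v is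
   the (inert) prime above the rational prime l.  O_v = lim O_K / l^n O_K is
   modelled by coherent sequences of truncations; K_v = O_v[1/l], so every
   (z, w) in K_v^2 can be written z = Z / l^k, w = W / l^(2k) with Z, W in O_v,
   and the equation becomes  d W^2 = d^2 X^4 + A d X^2 Z^2 + B Z^4, X = l^k. *)
Definition loc_solv (D l d A B : int) : Prop :=
  exists k : nat, exists Z W : nat -> okt,
    (forall n, ok_cong l n (Z n.+1) (Z n) /\ ok_cong l n (W n.+1) (W n)) /\
    (forall n, ok_cong l n (quart_res (omega_m D) d A B (l ^+ k) (Z n) (W n))
                          (0, 0)).

(* the infinite place: K imaginary quadratic, K_infty = C *)
Definition inf_solv (d A B : int) : Prop :=
  exists z w : algC, d%:~R * w ^+ 2 = (d ^+ 2)%:~R + (A * d)%:~R * z ^+ 2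
                                     + B%:~R * z ^+ 4.

(* S = {infty, (2), (p), (q)} (2, p, q inert) *)
Definition loc_all (D p q d A B : int) : Prop :=
  [/\ inf_solv d A B, loc_solv D 2 d A B, loc_solv D p d A B
    & loc_solv D q d A B].

Definition in_Sphi (D eps p q d : int) : Prop :=
  loc_all D p q d (- (2 * eps * (p + q))) 4.

Definition in_Shat (D eps p q d : int) : Prop :=
  loc_all D p q d (eps * (p + q)) (p * q).

(* the element (-1)^a 2^b p^c q^e of K(S,2) = <-1, 2, p, q> *)
Definition ks2 (p q : int) (a b c e : bool) : int :=
  (-1) ^+ a * 2 ^+ b * p ^+ c * q ^+ e.

(* Main.v *)
Require Import Defs.
From HB Require Import structures.
From mathcomp Require Import all_boot all_order all_algebra all_field all_solvable.
From Stdlib Require Import ZArith.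
From mathcomp Require Import ring zify.
From mathcomp.zify Require Import ssrZ.
Delimit Scope nat_scope with N.
Delimit Scope int_scope with Z.
Set Implicit Arguments. Unset Strict Implicit. Unset Printing Implicit Defensive.
Import Order.TTheory GRing.Theory Num.Theory.
Local Open Scope ring_scope.

Definition okd (l : int) (j : nat) (x : okt) : Prop :=
  (l ^+ j %| x.1)%Z /\ (l ^+ j %| x.2)%Z.

Definition okN (m : int) (x : okt) : int := x.1 ^+ 2 + x.1 * x.2 - m * x.2 ^+ 2.

Lemma okN_mul m x y : okN m (ok_mul m x y) = okN m x * okN m y.
Proof. case: x => a b; case: y => c d; rewrite /okN /ok_mul /=; ring. Qed.

Lemma dvdz_primeM (p : nat) (x y : int) : prime p ->
  (p%:Z %| x * y)%Z = (p%:Z %| x)%Z || (p%:Z %| y)%Z.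
Proof. by move=> pp; rewrite !dvdzE abszM; apply: Euclid_dvdM. Qed.

Lemma dvdz_primeX (p : nat) (x : int) n : prime p ->
  (p%:Z %| x ^+ n.+1)%Z -> (p%:Z %| x)%Z.
Proof.
move=> pp; elim: n => [|n IH]; first by rewrite expr1.
by rewrite exprS dvdz_primeM // => /orP[]// /IH.
Qed.

Lemma bezout_prime (p : nat) (x : int) : prime p -> ~~ (p%:Z %| x)%Z ->
  exists v, (p%:Z %| x * v - 1)%Z.
Proof.
move=> pp npx.
have cp : coprimez x p.
  by rewrite coprimezE coprime_sym prime_coprime //; move: npx; rewrite dvdzE.
have [u [v]] := Bezoutz x p; rewrite (eqP cp) => E.
exists u; apply/dvdzP; exists (- v); rewrite -E; ring.
Qed.

Lemma normdiv (D : int) (p : nat) x : prime p -> inert D p ->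
  (p%:Z %| okN (omega_m D) x)%Z -> (p%:Z %| x.1)%Z /\ (p%:Z %| x.2)%Z.
Proof.
move=> pp inD; case: x => a b /=; rewrite /okN /=; set m := omega_m D => H.
case Hb: (p%:Z %| b)%Z.
  split=> //; apply: (@dvdz_primeX p a 1 pp).
  have -> : a ^+ 2 = (a ^+ 2 + a * b - m * b ^+ 2) - b * (a - m * b) by ring.
  by apply: rpredB => //; exact: dvdz_mulr.
exfalso; have [v Hv] := bezout_prime pp (negbT Hb).
case/dvdzP: Hv => s Es.
have Ebv : b * v = 1 + s * p by rewrite -Es; ring.
apply: (inD (- (a * v))).
have -> : (- (a * v)) ^+ 2 - - (a * v) - m =
   v ^+ 2 * (a ^+ 2 + a * b - m * b ^+ 2)
   - p%:Z * (a * v * s - m * (2 * s + s * s * p%:Z)).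
  have -> : v ^+ 2 * (a ^+ 2 + a * b - m * b ^+ 2) =
    (a * v) ^+ 2 + (a * v) * (b * v) - m * (b * v) ^+ 2 by ring.
  rewrite Ebv; ring.
apply: rpredB; first exact: dvdz_mull.
by apply: dvdz_mulr.
Qed.

Definition ok_scale (c : int) (x : okt) : okt := (c * x.1, c * x.2).

Lemma ok_mul_const m c x : ok_mul m (ok_const c) x = ok_scale c x.
Proof. case: x => a b; rewrite /ok_mul /ok_scale /=; congr pair; ring. Qed.

Lemma okdE l j x : okd l j x -> x = ok_scale (l ^+ j) ((x.1 %/ l ^+ j)%Z, (x.2 %/ l ^+ j)%Z).
Proof.
case: x => a b [/= Ha Hb]; rewrite /ok_scale /=.
by rewrite mulrC divzK // mulrC divzK.
Qed.

Lemma okd_scale l i j x : l != 0 -> okd l (i + j) (ok_scale (l ^+ i) x) <-> okd l j x.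
Proof.
move=> l0; rewrite /okd /ok_scale /= exprD.
have li : l ^+ i != 0 by rewrite expf_neq0.
by rewrite !dvdz_mul2l.
Qed.

Lemma okd_scaleR l j c x : okd l j x -> okd l j (ok_scale c x).
Proof. by case=> H1 H2; split; rewrite /= dvdz_mull. Qed.

Lemma okd_le l i j x : (i <= j)%N -> okd l j x -> okd l i x.
Proof.
move=> ij [H1 H2]; have d := dvdz_exp2l l ij.
by split; [exact: dvdz_trans d H1 | exact: dvdz_trans d H2].
Qed.

Lemma okd_sub l j x y : okd l j x -> okd l j y -> okd l j (ok_sub x y).
Proof. by move=> [??] [??]; split; apply: rpredB. Qed.

Lemma okd_add l j x y : okd l j x -> okd l j y -> okd l j (ok_add x y).
Proof. by move=> [??] [??]; split; apply: rpredD. Qed.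

Lemma okd_mull l j m x y : okd l j x -> okd l j (ok_mul m x y).
Proof.
case: x => a b; case: y => c d [/= Ha Hb]; split; rewrite /=.
  apply: rpredD; first exact: dvdz_mulr.
  by rewrite mulrAC; apply: dvdz_mull.
apply: rpredD; first apply: rpredD.
- exact: dvdz_mulr.
- exact: dvdz_mulr.
- exact: dvdz_mulr.
Qed.

Lemma okd_mulr l j m x y : okd l j y -> okd l j (ok_mul m x y).
Proof.
move=> H; have -> : ok_mul m x y = ok_mul m y x.
  by case: x => a b; case: y {H} => c d; rewrite /ok_mul /=; congr pair; ring.
exact: okd_mull.
Qed.

Lemma okd0 l x : okd l 0 x.
Proof. by split; rewrite expr0 dvd1z. Qed.

Lemma ok_prime D (p : nat) x y : prime p -> inert D p ->
  okd p 1 (ok_mul (omega_m D) x y) -> okd p 1 x \/ okd p 1 y.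
Proof.
move=> pp inD H.
have : (p%:Z %| okN (omega_m D) (ok_mul (omega_m D) x y))%Z.
  case: H; rewrite expr1; case: (ok_mul _ x y) => a b /= Ha Hb.
  rewrite /okN /=; apply: rpredB; first apply: rpredD.
  - by rewrite expr2 dvdz_mulr.
  - by rewrite dvdz_mulr.
  - by rewrite expr2 mulrA dvdz_mull.
rewrite okN_mul dvdz_primeM // => /orP[] /(normdiv pp inD) [??];
  by [left; split; rewrite expr1 | right; split; rewrite expr1].
Qed.

Lemma okd_unit_scale (p : nat) (u : int) x : prime p -> ~~ (p%:Z %| u)%Z ->
  okd p 1 (ok_scale u x) -> okd p 1 x.
Proof.
move=> pp nu [H1 H2]; move: H1 H2; rewrite /= !expr1 !dvdz_primeM //.
by rewrite (negbTE nu) /= => ??; split; rewrite expr1.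
Qed.

Lemma ok_scale_mul m c c' x y :
  ok_mul m (ok_scale c x) (ok_scale c' y) = ok_scale (c * c') (ok_mul m x y).
Proof. case: x => a b; case: y => e f; rewrite /ok_mul /ok_scale /=; congr pair; ring. Qed.

Lemma ok_scale_scale c c' x : ok_scale c (ok_scale c' x) = ok_scale (c * c') x.
Proof. by case: x => a b; rewrite /ok_scale /=; congr pair; ring. Qed.

Lemma sqv_odd D (p : nat) (u : int) w j : prime p -> inert D p -> ~~ (p%:Z %| u)%Z ->
  okd p (2 * j + 1) (ok_scale u (ok_mul (omega_m D) w w)) -> okd p j.+1 w.
Proof.
move=> pp inD nu; elim: j w => [|j IH] w H.
  have := okd_unit_scale pp nu H => /(ok_prime pp inD); by case.
have H1 : okd p 1 w.
  have H0 := okd_le (isT : (1 <= 2 * j.+1 + 1)%N) H.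
  have := okd_unit_scale pp nu H0 => /(ok_prime pp inD); by case.
rewrite (okdE H1) in H *.
set w' := (_, _) in H *.
rewrite ok_scale_mul ok_scale_scale in H.
have p0 : p%:Z != 0 by rewrite eqz_nat -lt0n prime_gt0.
have E : u * (p%:Z ^+ 1 * p%:Z ^+ 1) = p%:Z ^+ 2 * u by ring.
rewrite E -ok_scale_scale in H.
have H' : okd p (2 + (2 * j + 1)) (ok_scale (p%:Z ^+ 2) (ok_scale u (ok_mul (omega_m D) w' w'))).
  by move: H; rewrite mulnS addnA.
move/(okd_scale 2 _ _ p0): H' => /IH.
rewrite (_ : (j.+2 = 1 + j.+1)%N) //.
by move=> h; apply/(okd_scale 1 _ _ p0).
Qed.

Lemma sqv_even D (p : nat) (u : int) w j : prime p -> inert D p -> ~~ (p%:Z %| u)%Z ->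
  okd p (2 * j) (ok_scale u (ok_mul (omega_m D) w w)) -> okd p j w.
Proof.
move=> pp inD nu; case: j => [|j] H; first exact: okd0.
apply: sqv_odd pp inD nu _; apply: okd_le H; rewrite mulnS; lia.
Qed.

Definition Rf m d A B (X : int) Z :=
  let Z2 := ok_mul m Z Z in
  ok_add (ok_const (d ^+ 2 * X ^+ 4))
    (ok_add (ok_scale (A * d * X ^+ 2) Z2) (ok_scale B (ok_mul m Z2 Z2))).

Lemma quartE m d A B X Z W :
  quart_res m d A B X Z W = ok_sub (ok_scale d (ok_mul m W W)) (Rf m d A B X Z).
Proof. by rewrite /quart_res /Rf !ok_mul_const. Qed.

Lemma cong0 l n x : ok_cong l n x (0, 0) <-> okd l n x.
Proof. by rewrite /ok_cong /okd /= !subr0. Qed.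

Lemma okd_elim l j x y : okd l j (ok_sub x y) -> okd l j x -> okd l j y.
Proof.
case: x => a b; case: y => c d [/= H1 H2] [/= H3 H4]; split => /=.
  have -> : c = a - (a - c) by ring.
  exact: rpredB.
have -> : d = b - (b - d) by ring.
exact: rpredB.
Qed.

Lemma okd_elim2 l j x y : okd l j (ok_sub x y) -> okd l j y -> okd l j x.
Proof.
case: x => a b; case: y => c d [/= H1 H2] [/= H3 H4]; split => /=.
  by rewrite -(subrK c a) rpredD.
by rewrite -(subrK d b) rpredD.
Qed.

Lemma val_split l k x : ~ okd l k.+1 x ->
  exists z0, [/\ (z0 <= k)%N, okd l z0 x & ~ okd l z0.+1 x].
Proof.
elim: k => [|k IH] H; first by exists 0%N; split=> //; exact: okd0.
case: (boolP [&& (l ^+ k.+1 %| x.1)%Z & (l ^+ k.+1 %| x.2)%Z]) => [/andP[??]|nH].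
  by exists k.+1; split.
have [z0 [? ? ?]] : exists z0, [/\ (z0 <= k)%N, okd l z0 x & ~ okd l z0.+1 x].
  by apply: IH => -[??]; move/negP: nH; apply; apply/andP.
by exists z0; split=> //; apply: leqW.
Qed.

Lemma okd_scale_pow l j x : okd l j (ok_scale (l ^+ j) x).
Proof. by split; rewrite /= dvdz_mulr. Qed.

Lemma okd_scale_inv l i j x : l != 0 -> okd l (i + j) (ok_scale (l ^+ i) x) -> okd l j x.
Proof. by move=> l0 /(okd_scale _ _ _ l0). Qed.

Lemma okd_addl l j x y : okd l j (ok_add x y) -> okd l j y -> okd l j x.
Proof.
case: x => a b; case: y => c d [/= H1 H2] [/= H3 H4]; split => /=.
  have -> : a = (a + c) - c by ring.
  exact: rpredB.
have -> : b = (b + d) - d by ring.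
exact: rpredB.
Qed.

Lemma pow_lin (l : int) k a b : l ^+ (a * k + b) = (l ^+ k) ^+ a * l ^+ b.
Proof. by rewrite exprD mulnC exprM. Qed.

Lemma ok_sq_prime D (l : nat) x : prime l -> inert D l ->
  okd l 1 (ok_mul (omega_m D) x x) -> okd l 1 x.
Proof. by move=> pl inD /(ok_prime pl inD) []. Qed.

Lemma L1 D (l : nat) (u A B : int) : prime l -> inert D l ->
  ~~ (l%:Z %| u)%Z -> ~~ (l%:Z %| B)%Z -> ~ loc_solv D l%:Z (l%:Z * u) A B.
Proof.
move=> pl inD nu nB [k [Z [W [_ Hs]]]].
set m := omega_m D.
have l0 : l%:Z != 0 by rewrite eqz_nat -lt0n prime_gt0.
set N := (4 * k + 3)%N.
have := Hs N; rewrite cong0 quartE.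
set z := Z N; set w := W N => H.
have Hdw : ok_scale (l%:Z * u) (ok_mul m w w) = ok_scale (l%:Z ^+ 1) (ok_scale u (ok_mul m w w)).
  by rewrite ok_scale_scale expr1.
case: (boolP [&& (l%:Z ^+ k.+1 %| z.1)%Z & (l%:Z ^+ k.+1 %| z.2)%Z]) => [/andP[h1 h2] | nz].
- have Hz : okd l k.+1 z by [].
  rewrite (okdE Hz) in H; set z' := (_, _) in H.
  have ER : Rf m (l%:Z * u) A B (l%:Z ^+ k) (ok_scale (l%:Z ^+ k.+1) z') =
     ok_scale (l%:Z ^+ (4 * k + 2)) (ok_add (ok_const (u ^+ 2))
        (ok_scale (l%:Z ^+ 1) (ok_add (ok_scale (A * u) (ok_mul m z' z'))
            (ok_scale (l%:Z * B) (ok_mul m (ok_mul m z' z') (ok_mul m z' z')))))).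
    rewrite pow_lin exprS mulrC; set c := l%:Z ^+ k.
    clear H; case: z' => x1 x2; rewrite /Rf /ok_mul /ok_add /ok_scale /ok_const /=.
    congr pair; ring.
  rewrite ER in H.
  have H2 : okd l (4 * k + 2) (ok_scale (l%:Z * u) (ok_mul m w w)).
    apply: okd_elim2 (okd_le _ H) (okd_scale_pow _ _ _); rewrite /N; lia.
  rewrite Hdw (_ : (4 * k + 2 = 1 + (2 * (2 * k) + 1))%N) in H2; last by lia.
  have Hw := sqv_odd pl inD nu (okd_scale_inv l0 H2).
  have H4 : okd l N (ok_scale (l%:Z * u) (ok_mul m w w)).
    rewrite (okdE Hw) ok_scale_mul ok_scale_scale.
    set w' := (_, _).
    have -> : l%:Z * u * (l%:Z ^+ (2 * k).+1 * l%:Z ^+ (2 * k).+1)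
        = l%:Z ^+ N * u.
      rewrite /N (_ : (4 * k + 3 = 2 * (2 * k) + 3)%N); last by lia.
      rewrite pow_lin exprS.
      rewrite (_ : (3 = 1 + 1 + 1)%N) // !exprD !expr1; ring.
    rewrite -ok_scale_scale; exact: okd_scale_pow.
  have H5 := okd_elim H H4.
  rewrite (_ : N = (4 * k + 2) + 1)%N in H5; last by rewrite /N; lia.
  have H6 := okd_scale_inv l0 H5.
  have H7 := okd_addl H6 (okd_scale_pow _ _ _).
  case: H7 => /= + _; rewrite expr1 => /(dvdz_primeX pl).
  by rewrite (negbTE nu).
- have nz' : ~ okd l k.+1 z by move=> [h1 h2]; move/negP: nz; apply; apply/andP.
  have [z0 [z0k Hz0 nHz0]] := val_split nz'.
  rewrite (okdE Hz0) in H nHz0; set z' := (_, _) in H nHz0.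
  have nz'' : ~ okd l 1 z'.
    by move=> h; apply: nHz0; rewrite -addn1; apply/(okd_scale _ _ _ l0).
  have Ek : l%:Z ^+ k = l%:Z ^+ z0 * l%:Z ^+ (k - z0) by rewrite -exprD subnKC.
  have ER : Rf m (l%:Z * u) A B (l%:Z ^+ k) (ok_scale (l%:Z ^+ z0) z') =
     ok_scale (l%:Z ^+ (4 * z0 + 0)) (ok_add (ok_scale B (ok_mul m (ok_mul m z' z') (ok_mul m z' z')))
        (ok_scale (l%:Z ^+ 1) (ok_add (ok_const (l%:Z * u ^+ 2 * (l%:Z ^+ (k - z0)) ^+ 4))
            (ok_scale (A * u * (l%:Z ^+ (k - z0)) ^+ 2) (ok_mul m z' z'))))).
    rewrite Ek pow_lin expr0 mulr1 expr1; set a := l%:Z ^+ z0; set b := l%:Z ^+ (k - z0).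
    case: z' {nz'' nHz0 H} => x1 x2; rewrite /Rf /ok_mul /ok_add /ok_scale /ok_const /=.
    congr pair; ring.
  rewrite ER in H.
  have H2 : okd l (4 * z0 + 0) (ok_scale (l%:Z * u) (ok_mul m w w)).
    apply: okd_elim2 (okd_le _ H) (okd_scale_pow _ _ _); rewrite /N; lia.
  have key : forall n, okd l (4 * n + 0) (ok_scale (l%:Z * u) (ok_mul m w w)) ->
     okd l (4 * n + 1) (ok_scale (l%:Z * u) (ok_mul m w w)).
    case => [|z1] H2'.
      by rewrite Hdw; exact: okd_scale_pow.
    rewrite Hdw (_ : (4 * z1.+1 + 0 = 1 + (2 * (2 * z1 + 1) + 1))%N) in H2'; last by lia.
    have Hw := sqv_odd pl inD nu (okd_scale_inv l0 H2').
    rewrite (okdE Hw) ok_scale_mul ok_scale_scale.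
    have -> : l%:Z * u * (l%:Z ^+ (2 * z1 + 1).+1 * l%:Z ^+ (2 * z1 + 1).+1)
        = l%:Z ^+ (4 * z1.+1 + 1) * u.
      rewrite (_ : (4 * z1.+1 + 1 = 2 * (2 * z1 + 2) + 1)%N); last by lia.
      rewrite pow_lin expr1 (_ : ((2 * z1 + 1).+1 = 2 * z1 + 2)%N); last by lia.
      ring.
    rewrite -ok_scale_scale; exact: okd_scale_pow.
  have H3 := key _ H2.
  have hle : (4 * z0 + 1 <= N)%N by rewrite /N; lia.
  have H4 := okd_elim (okd_le hle H) H3.
  rewrite (_ : (4 * z0 + 1 = (4 * z0 + 0) + 1)%N) ?addn0 // in H4.
  have H5 := okd_scale_inv l0 H4.
  have H6 := okd_addl H5 (okd_scale_pow _ _ _).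
  have H7 := okd_unit_scale pl nB H6.
  by apply: nz''; apply: (ok_sq_prime pl inD); apply: (ok_sq_prime pl inD).
Qed.


Lemma Zp_dvd (M : nat) (x : int) : (1 < M)%N ->
  (M%:Z %| x)%Z <-> (x%:~R : 'Z_M) = 0.
Proof.
move=> M1.
have key : forall n : nat, (M %| n)%N <-> (n%:R : 'Z_M) = 0.
  move=> n; split=> [H | H].
    by apply/val_inj; rewrite /= val_Zp_nat //; apply/eqP.
  by apply/eqP; rewrite -(val_Zp_nat M1) H.
case: x => n.
  by rewrite dvdzE /=; exact: key.
rewrite NegzE dvdzE abszN /= mulrNz /=.
change ((M %| n.+1)%N <-> - ((n.+1)%:R : 'Z_M) = 0).
rewrite key.
by split=> [->|/eqP]; [rewrite oppr0|rewrite oppr_eq0 => /eqP].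
Qed.

Lemma int_of_Z_nat (n : nat) : int_of_Z (Z.of_nat n) = n%:Z.
Proof. apply: (can_inj Z_of_intK); by rewrite int_of_ZK. Qed.

Definition zmul {R : comNzRingType} (mm : R) (x y : R * R) : R * R :=
  (x.1 * y.1 + mm * x.2 * y.2, x.1 * y.2 + x.2 * y.1 + x.2 * y.2).

Lemma ok_mulE m x y : ok_mul m x y = zmul m x y.
Proof. by []. Qed.

Definition fm2 {R S : Type} (f : R -> S) (x : R * R) := (f x.1, f x.2).

Lemma zmul_morph (R S : comNzRingType) (f : {rmorphism R -> S}) mm x y :
  fm2 f (zmul mm x y) = zmul (f mm) (fm2 f x) (fm2 f y).
Proof. by rewrite /fm2 /zmul /= !(rmorphD, rmorphM). Qed.

Definition Gsig := forall R : comNzRingType, R -> R -> seq R.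
Definition Fsig := forall R : comNzRingType, R -> R -> R * R -> R * R -> seq R.

Definition rngZ (M : nat) : seq Z := map Z.of_nat (iota 0 M).
Definition allZ (M : nat) (P : Z -> bool) := all P (rngZ M).
Definition zeroZ (M : nat) (v : Z) := Z.eqb (Z.modulo v (Z.of_nat M)) Z0.

Definition checkZ (M : nat) (G : Gsig) (F : Fsig) : bool :=
  allZ M (fun mm => allZ M (fun ee => ~~ all (zeroZ M) (G _ mm ee) ||
    allZ M (fun a => allZ M (fun b => allZ M (fun c => allZ M (fun d =>
      ~~ all (zeroZ M) (F _ mm ee (a, b) (c, d)))))))).

Definition Gmorph (G : Gsig) := forall (R S : comNzRingType) (f : {rmorphism R -> S}) mm ee,
  G S (f mm) (f ee) = map f (G R mm ee).
Definition Fmorph (F : Fsig) := forall (R S : comNzRingType) (f : {rmorphism R -> S}) mm ee w z,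
  F S (f mm) (f ee) (fm2 f w) (fm2 f z) = map f (F R mm ee w z).

Section Sound.
Variables (M : nat) (M1 : (1 < M)%N).

Let psi (v : Z) : 'Z_M := (int_of_Z v)%:~R.

Lemma psi_lift (x : 'Z_M) : exists2 a, a \in rngZ M & psi a = x.
Proof.
exists (Z.of_nat (val x)).
  by apply: map_f; rewrite mem_iota /= add0n; case: x => /= n; rewrite Zp_cast.
by rewrite /psi int_of_Z_nat; exact: natr_Zp.
Qed.

Lemma psi0 v : psi v = 0 -> zeroZ M v.
Proof.
move/(Zp_dvd _ M1) => /dvdzP [q Hq]; apply/Z.eqb_eq.
have -> : v = Z.mul (Z_of_int q) (Z.of_nat M).
  by rewrite -[v]int_of_ZK Hq rmorphM.
apply: Z.mod_mul; lia.
Qed.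

Lemma map_psi (s : seq Z) : all (fun x : 'Z_M => x == 0) (map psi s) -> all (zeroZ M) s.
Proof. by elim: s => //= x s IH /andP[/eqP/psi0 -> /IH]. Qed.

Lemma map_phi (s : seq int) : all (fun v => (M%:Z %| v)%Z) s -> all (fun x : 'Z_M => x == 0) (map intr s).
Proof. by elim: s => //= x s IH /andP[/(Zp_dvd _ M1) -> /IH ->]. Qed.

Lemma checkZ_sound G F : Gmorph G -> Fmorph F -> checkZ M G F ->
  forall (m e : int) (w z : int * int),
  all (fun v => (M%:Z %| v)%Z) (G _ m e) ->
  all (fun v => (M%:Z %| v)%Z) (F _ m e w z) -> False.
Proof.
move=> GM FM chk m e [w1 w2] [z1 z2] Hg Hf.
have psiE (v : Z) : psi v = intr (int_of_Z v) by [].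
have Gpsi mm ee : G _ (psi mm) (psi ee) = map psi (G _ mm ee).
  rewrite /psi (GM _ _ intr) (GM _ _ int_of_Z) -map_comp; exact: eq_map.
have Fpsi mm ee w z : F _ (psi mm) (psi ee) (fm2 psi w) (fm2 psi z) = map psi (F _ mm ee w z).
  have -> : fm2 psi w = fm2 intr (fm2 int_of_Z w) by [].
  have -> : fm2 psi z = fm2 intr (fm2 int_of_Z z) by [].
  rewrite /psi (FM _ _ intr) (FM _ _ int_of_Z) -map_comp; exact: eq_map.
have [am Am Em] := psi_lift (m%:~R).
have [ae Ae Ee] := psi_lift (e%:~R).
have [a1 A1 E1] := psi_lift (w1%:~R).
have [a2 A2 E2] := psi_lift (w2%:~R).
have [a3 A3 E3] := psi_lift (z1%:~R).
have [a4 A4 E4] := psi_lift (z2%:~R).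
move/allP/(_ am Am)/allP/(_ ae Ae): chk.
have -> : all (zeroZ M) (G _ am ae).
  apply: map_psi; rewrite -Gpsi Em Ee (GM _ _ intr); exact: map_phi.
move=> /= /allP/(_ a1 A1)/allP/(_ a2 A2)/allP/(_ a3 A3)/allP/(_ a4 A4).
suff -> : all (zeroZ M) (F _ am ae (a1, a2) (a3, a4)) by [].
apply: map_psi; rewrite -Fpsi /fm2 /= Em Ee E1 E2 E3 E4.
rewrite (_ : (w1%:~R, w2%:~R) = fm2 intr (w1, w2)) //.
rewrite (_ : (z1%:~R, z2%:~R) = fm2 intr (z1, z2)) //.
rewrite (FM _ _ intr); exact: map_phi.
Qed.
End Sound.


Definition nrm {R : comNzRingType} (mm : R) (z : R * R) := z.1 * z.1 + z.1 * z.2 - mm * (z.2 * z.2).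

Definition Godd2 : Gsig := fun R mm ee => [:: 2 * mm - 2].
Definition Godd4 (c : nat) : Gsig := fun R mm ee => [:: 4 * mm - 4; 2 * ee - c%:R].

Definition F2a : Fsig := fun R mm ee w z => let ww := zmul mm w w in [:: ww.1 + 1; ww.2].
Definition Fb (s : int) : Fsig := fun R mm ee w z =>
  let ww := zmul mm w w in let z4 := zmul mm (zmul mm z z) (zmul mm z z) in
  [:: 2 * (nrm mm z - 1); ww.1 + s%:~R * z4.1; ww.2 + s%:~R * z4.2].
Definition Fa (s : int) : Fsig := fun R mm ee w z =>
  let ww := zmul mm w w in let z2 := zmul mm z z in let z4 := zmul mm z2 z2 in
  [:: 2 * ww.1 + s%:~R * (1 + s%:~R * 2 * ee * z2.1 + z4.1);
      2 * ww.2 + s%:~R * (s%:~R * 2 * ee * z2.2 + z4.2)].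

Lemma Godd2M : Gmorph Godd2.
Proof. by move=> R S f mm ee; rewrite /Godd2 /= !(rmorphB, rmorphM, rmorph_nat). Qed.
Lemma Godd4M c : Gmorph (Godd4 c).
Proof. by move=> R S f mm ee; rewrite /Godd4 /= !(rmorphB, rmorphM, rmorph_nat). Qed.

Ltac fmorph := move=> R S f mm ee w z; rewrite /F2a /Fb /Fa /zmul /nrm /fm2 /=;
  rewrite !(rmorphB, rmorphD, rmorphM, rmorph_nat, rmorph1, rmorph_int).

Lemma F2aM : Fmorph F2a. Proof. by fmorph. Qed.
Lemma FbM s : Fmorph (Fb s). Proof. by fmorph. Qed.
Lemma FaM s : Fmorph (Fa s). Proof. by fmorph. Qed.

Lemma C1 : checkZ 4 Godd2 F2a. Proof. by vm_compute. Qed.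
Lemma C2 : checkZ 4 Godd2 (Fb 1). Proof. by vm_compute. Qed.
Lemma C3b : checkZ 4 Godd2 (Fb (-2)). Proof. by vm_compute. Qed.
Lemma C4b : checkZ 4 Godd2 (Fb 2). Proof. by vm_compute. Qed.
Lemma C3a : checkZ 8 (Godd4 4) (Fa (-1)). Proof. by vm_compute. Qed.
Lemma C4a : checkZ 8 (Godd4 0) (Fa 1). Proof. by vm_compute. Qed.


Definition Dlist : seq int := [:: -11; -19; -43; -67; -163].

Lemma Dfacts D : D \in Dlist ->
  [/\ (2 %| omega_m D - 1)%Z, 4 * omega_m D = D - 1 & (8 %| D - 5)%Z].
Proof.
rewrite !inE => /orP[/eqP->|/orP[/eqP->|/orP[/eqP->|/orP[/eqP->|/eqP->]]]];
  by split; vm_compute.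
Qed.

Lemma inert2 D : (2 %| omega_m D - 1)%Z -> inert D (2%N)%:Z.
Proof.
move=> hm x H.
have hx : (2 %| x * (x - 1))%Z.
  have : (2 %| x)%Z \/ (2 %| x - 1)%Z by lia.
  by case=> h; [rewrite dvdz_mulr | rewrite dvdz_mull].
have : x ^+ 2 - x - omega_m D = x * (x - 1) - omega_m D by ring.
move: H hx hm; set y := x * (x - 1); set mm := omega_m D => H hx hm E.
move: H; rewrite E; lia.
Qed.

Lemma quart_hom m d A B X Z W :
  quart_res m d A B (2 * X) (ok_scale 2 Z) (ok_scale 4 W) =
  ok_scale 16 (quart_res m d A B X Z W).
Proof.
case: Z => z1 z2; case: W => w1 w2.
rewrite /quart_res /ok_sub /ok_add /ok_mul /ok_const /ok_scale /=.
congr pair; ring.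
Qed.

Lemma Rf_hom m d A B X Z :
  Rf m d A B (2 * X) (ok_scale 2 Z) = ok_scale 16 (Rf m d A B X Z).
Proof.
case: Z => z1 z2.
rewrite /Rf /ok_add /ok_mul /ok_const /ok_scale /=.
congr pair; ring.
Qed.

Lemma two_sq D (d : int) W : D \in Dlist -> (d = -1 \/ d = 2 \/ d = -2) ->
  okd (2%N)%:Z 4 (ok_scale d (ok_mul (omega_m D) W W)) -> okd (2%N)%:Z 2 W.
Proof.
move=> /Dfacts [hm _ _] hd H.
have i2 := inert2 hm.
have p2 : prime 2 by [].
case: hd => [E|[E|E]]; rewrite E in H.
- by apply: (sqv_even (j := 2) p2 i2 _ H).
- have H' : okd (2%N)%:Z (1 + (2 * 1 + 1)) (ok_scale ((2%N)%:Z ^+ 1) (ok_scale 1 (ok_mul (omega_m D) W W))).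
    by rewrite ok_scale_scale.
  exact: (sqv_odd (j := 1) p2 i2 _ (okd_scale_inv _ H')).
- have H' : okd (2%N)%:Z (1 + (2 * 1 + 1)) (ok_scale ((2%N)%:Z ^+ 1) (ok_scale (-1) (ok_mul (omega_m D) W W))).
    by rewrite ok_scale_scale.
  exact: (sqv_odd (j := 1) p2 i2 _ (okd_scale_inv _ H')).
Qed.

Lemma ok_sub_scale a x y : ok_sub (ok_scale a x) (ok_scale a y) = ok_scale a (ok_sub x y).
Proof. by case: x => ??; case: y => ??; rewrite /ok_sub /ok_scale /=; congr pair; ring. Qed.

Lemma norm2 D (d A B : int) c : D \in Dlist -> (d = -1 \/ d = 2 \/ d = -2) ->
  forall k Z W, okd (2%N)%:Z (4 * k + c) (quart_res (omega_m D) d A B (2 ^+ k) Z W) ->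
  exists k' Z' W', okd (2%N)%:Z c (quart_res (omega_m D) d A B (2 ^+ k') Z' W') /\
     (k' = 0%N \/ (0 < k')%N /\ ~ okd (2%N)%:Z 1 Z').
Proof.
move=> hD hd; elim=> [|k IH] Z W H.
  by exists 0%N, Z, W; split; [rewrite muln0 add0n in H | left].
case: (boolP [&& (2%:Z ^+ 1 %| Z.1)%Z & (2%:Z ^+ 1 %| Z.2)%Z]) => [/andP[h1 h2] | nz].
- have HZ : okd (2%N)%:Z 1 Z by [].
  rewrite (okdE HZ) in H; set Z' := (_, _) in H.
  rewrite quartE exprS expr1 Rf_hom in H.
  have H4 : okd (2%N)%:Z 4 (ok_scale d (ok_mul (omega_m D) W W)).
    apply: okd_elim2 (okd_le _ H) _; first by lia.
    by rewrite (_ : 16 = (2%N)%:Z ^+ 4) //; exact: okd_scale_pow.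
  have HW := two_sq hD hd H4.
  rewrite (okdE HW) ok_scale_mul ok_scale_scale in H; set W' := (_, _) in H.
  rewrite (_ : d * ((2%N)%:Z ^+ 2 * (2%N)%:Z ^+ 2) = 16 * d) in H; last by ring.
  rewrite -ok_scale_scale ok_sub_scale -quartE in H.
  rewrite (_ : 16 = (2%N)%:Z ^+ 4) // (_ : (4 * k.+1 + c = 4 + (4 * k + c))%N) in H; last by lia.
  exact: IH _ _ (okd_scale_inv _ H).
- exists k.+1, Z, W; split; first by apply: okd_le H; lia.
  by right; split=> // -[h1 h2]; move/negP: nz; apply; apply/andP.
Qed.


Lemma quart_comp m d A B X Z W : quart_res m d A B X Z W =
  (d * (zmul m W W).1 - (d ^+ 2 * X ^+ 4 + A * d * X ^+ 2 * (zmul m Z Z).1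
      + B * (zmul m (zmul m Z Z) (zmul m Z Z)).1),
   d * (zmul m W W).2 - (A * d * X ^+ 2 * (zmul m Z Z).2
      + B * (zmul m (zmul m Z Z) (zmul m Z Z)).2)).
Proof.
rewrite /quart_res /ok_sub /ok_add /ok_mul /ok_const /zmul /=.
congr pair; ring.
Qed.

Lemma dvd_comb (K x y s t : int) : (K %| x)%Z -> y = s * x + K * t -> (K %| y)%Z.
Proof. by move=> H ->; apply: rpredD; [apply: dvdz_mull | apply: dvdz_mulr]. Qed.

Lemma dvd_half (K y : int) : (2 * K %| 2 * y)%Z -> (K %| y)%Z.
Proof. by rewrite dvdz_mul2l. Qed.

Lemma unit_norm D Z : D \in Dlist -> ~ okd (2%N)%:Z 1 Z ->
  (2 %| nrm (omega_m D) Z - 1)%Z.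
Proof.
move=> hD nZ; have [hm _ _] := Dfacts hD.
have : ~~ (2 %| okN (omega_m D) Z)%Z.
  apply/negP => /(normdiv (isT : prime 2) (inert2 hm)) [h1 h2].
  by apply: nZ; split; rewrite expr1.
rewrite /okN /nrm !expr2; set t := _ - _; lia.
Qed.

Lemma sq_half D W : D \in Dlist -> okd (2%N)%:Z 1 (zmul (omega_m D) W W) ->
  exists W', W = ok_scale 2 W' /\ zmul (omega_m D) W W = ok_scale 4 (zmul (omega_m D) W' W').
Proof.
move=> hD H; have [hm _ _] := Dfacts hD.
have HW := ok_sq_prime (isT : prime 2) (inert2 hm) H.
exists ((W.1 %/ 2 ^+ 1)%Z, (W.2 %/ 2 ^+ 1)%Z); split; first by rewrite {1}(okdE HW).
rewrite {1 2}(okdE HW) -!ok_mulE ok_scale_mul expr1.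
by rewrite (_ : (2%N)%:Z * (2%N)%:Z = 4).
Qed.

Lemma dvd2le (i j : nat) (x : int) : (i <= j)%N ->
  ((2%N)%:Z ^+ j %| x)%Z -> ((2%N)%:Z ^+ i %| x)%Z.
Proof. by move=> ij; apply: dvdz_trans; apply: dvdz_exp2l. Qed.

Lemma L2 D (a : int) : D \in Dlist -> ~ loc_solv D (2%N)%:Z (-1) (4 * a) 4.
Proof.
move=> hD [k [Z [W [_ Hs]]]].
have [hm _ _] := Dfacts hD.
have := Hs (4 * k + 4)%N; rewrite cong0 => H.
have [k' [Z' [W' [H' Hk]]]] := norm2 hD (or_introl erefl) H.
move: H'; set m := omega_m D => H'.
have sound := checkZ_sound (isT : (1 < 4)%N).
case: Hk => [Ek | [k0 nZ]].
- rewrite Ek quart_comp expr0 in H'; case: H' => H1 H2.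
  move/(dvd2le (isT : (2 <= 4)%N)): H1 => H1.
  move/(dvd2le (isT : (2 <= 4)%N)): H2 => H2.
  apply: (sound _ _ Godd2M F2aM C1 m 0 W' Z').
    rewrite /Godd2 /all andbT.
    move: hm; rewrite -/m; clearbody m; clear; lia.
  rewrite /F2a /all andbT; rewrite (_ : (2%N)%:Z ^+ 2 = 4) // in H1 H2.
  apply/andP; split.
    apply: (dvd_comb (s := -1) (t := a * (zmul m Z' Z').1 -
       (zmul m (zmul m Z' Z') (zmul m Z' Z')).1) H1); rewrite /=; ring.
  apply: (dvd_comb (s := -1) (t := a * (zmul m Z' Z').2 -
       (zmul m (zmul m Z' Z') (zmul m Z' Z')).2) H2); rewrite /=; ring.
- have EX : (2 : int) ^+ k' = 2 * 2 ^+ k'.-1 by rewrite -exprS prednK.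
  rewrite EX quart_comp in H'; case: H' => H1 H2.
  set Y := 2 ^+ k'.-1 in H1 H2.
  set z2 := zmul m Z' Z' in H1 H2; set z4 := zmul m z2 z2 in H1 H2.
  have h1 := dvd2le (isT : (2 <= 4)%N) H1.
  have h2 := dvd2le (isT : (2 <= 4)%N) H2.
  rewrite (_ : (2%N)%:Z ^+ 2 = 4) // in h1 h2.
  have hw : okd (2%N)%:Z 1 (zmul m W' W').
    split; apply: dvdz_trans (_ : (2%N)%:Z ^+ 1 %| 4)%Z _ => //.
      by apply: (dvd_comb (s := -1) (t := - (4 * Y ^+ 4 - 4 * a * Y ^+ 2 * z2.1 + z4.1)) h1); rewrite /=; ring.
    by apply: (dvd_comb (s := -1) (t := - (- 4 * a * Y ^+ 2 * z2.2 + z4.2)) h2); rewrite /=; ring.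
  have [W'' [_ Ew]] := sq_half hD hw.
  rewrite Ew in H1 H2; set vv := zmul m W'' W'' in H1 H2.
  rewrite (_ : (2%N)%:Z ^+ 4 = 4 * 4) // in H1 H2.
  have g1 : (4 * 4 %| 4 * (vv.1 + z4.1))%Z.
    by apply: (dvd_comb (s := -1) (t := - (Y ^+ 4 - a * Y ^+ 2 * z2.1)) H1); rewrite /=; ring.
  have g2 : (4 * 4 %| 4 * (vv.2 + z4.2))%Z.
    by apply: (dvd_comb (s := -1) (t := a * Y ^+ 2 * z2.2) H2); rewrite /=; ring.
  rewrite dvdz_mul2l // in g1; rewrite dvdz_mul2l // in g2.
  apply: (sound _ _ Godd2M (FbM 1) C2 m 0 W'' Z').
    rewrite /Godd2 /all andbT.
    move: hm; rewrite -/m; clearbody m; clear; lia.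
  rewrite /Fb /all andbT (_ : 1%:~R = 1 :> int) // !mul1r.
  have hn := unit_norm hD nZ.
  apply/andP; split; first by move: hn; rewrite -/m; set t := nrm _ _; clear; lia.
  by apply/andP; split.
Qed.

Lemma L3 D (a : int) : D \in Dlist -> (4 %| a + 2)%Z -> ~ loc_solv D (2%N)%:Z 2 (4 * a) 4.
Proof.
move=> hD ha [k [Z [W [_ Hs]]]].
have [hm _ _] := Dfacts hD.
have := Hs (4 * k + 5)%N; rewrite cong0 => H.
have [k' [Z' [W' [H' Hk]]]] := norm2 hD (or_intror (or_introl erefl)) H.
move: H'; set m := omega_m D => H'.
case: Hk => [Ek | [k0 nZ]].
- have sound := checkZ_sound (isT : (1 < 8)%N).
  rewrite Ek quart_comp expr0 in H'; case: H' => H1 H2.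
  set z2 := zmul m Z' Z' in H1 H2; set z4 := zmul m z2 z2 in H1 H2.
  have h1 := dvd2le (isT : (2 <= 5)%N) H1.
  have h2 := dvd2le (isT : (2 <= 5)%N) H2.
  rewrite (_ : (2%N)%:Z ^+ 2 = 2 * 2) // in h1 h2.
  have hw : okd (2%N)%:Z 1 (zmul m W' W').
    rewrite /okd expr1; split; rewrite -(@dvdz_mul2l 2) //.
      by apply: (dvd_comb (s := 1) (t := 1 + 2 * a * z2.1 + z4.1) h1); rewrite /=; ring.
    by apply: (dvd_comb (s := 1) (t := 2 * a * z2.2 + z4.2) h2); rewrite /=; ring.
  have [W'' [_ Ew]] := sq_half hD hw.
  rewrite Ew in H1 H2; set vv := zmul m W'' W'' in H1 H2.
  rewrite (_ : (2%N)%:Z ^+ 5 = 4 * 8) // in H1 H2.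
  apply: (sound _ _ (Godd4M 4) (FaM (-1)) C3a m (- a) W'' Z').
    rewrite /Godd4 /all andbT; apply/andP; split.
      by move: hm; rewrite -/m; clearbody m; clear; lia.
    by move: ha; clear; lia.
  rewrite /Fa /all andbT (_ : (-1)%:~R = -1 :> int) //.
  apply/andP; split; rewrite -(@dvdz_mul2l 4) //.
    by apply: (dvd_comb (s := 1) (t := 0) H1); rewrite /=; ring.
  by apply: (dvd_comb (s := 1) (t := 0) H2); rewrite /=; ring.
- have sound := checkZ_sound (isT : (1 < 4)%N).
  have EX : (2 : int) ^+ k' = 2 * 2 ^+ k'.-1 by rewrite -exprS prednK.
  rewrite EX quart_comp in H'; case: H' => H1 H2.
  set Y := 2 ^+ k'.-1 in H1 H2.
  set z2 := zmul m Z' Z' in H1 H2; set z4 := zmul m z2 z2 in H1 H2.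
  set ww := zmul m W' W' in H1 H2.
  rewrite (_ : (2%N)%:Z ^+ 5 = 2 * 16) // in H1 H2.
  have g1 : (2 * 16 %| 2 * (ww.1 - 2 * z4.1))%Z.
    by apply: (dvd_comb (s := 1) (t := 2 * Y ^+ 4 + a * Y ^+ 2 * z2.1) H1); rewrite /=; ring.
  have g2 : (2 * 16 %| 2 * (ww.2 - 2 * z4.2))%Z.
    by apply: (dvd_comb (s := 1) (t := a * Y ^+ 2 * z2.2) H2); rewrite /=; ring.
  rewrite dvdz_mul2l // in g1; rewrite dvdz_mul2l // in g2.
  apply: (sound _ _ Godd2M (FbM (-2)) C3b m 0 W' Z').
    rewrite /Godd2 /all andbT.
    move: hm; rewrite -/m; clearbody m; clear; lia.
  rewrite /Fb /all andbT (_ : (-2)%:~R = -2 :> int) //.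
  have hn := unit_norm hD nZ.
  apply/andP; split; first by move: hn; rewrite -/m; set t := nrm _ _; clear; lia.
  apply/andP; split.
    apply: dvdz_trans (_ : 4 %| 16)%Z _ => //.
    by apply: (dvd_comb (s := 1) (t := 0) g1); rewrite /=; ring.
  apply: dvdz_trans (_ : 4 %| 16)%Z _ => //.
  by apply: (dvd_comb (s := 1) (t := 0) g2); rewrite /=; ring.
Qed.

Lemma L4 D (a : int) : D \in Dlist -> (4 %| a)%Z -> ~ loc_solv D (2%N)%:Z (-2) (4 * a) 4.
Proof.
move=> hD ha [k [Z [W [_ Hs]]]].
have [hm _ _] := Dfacts hD.
have := Hs (4 * k + 5)%N; rewrite cong0 => H.
have [k' [Z' [W' [H' Hk]]]] := norm2 hD (or_intror (or_intror erefl)) H.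
move: H'; set m := omega_m D => H'.
case: Hk => [Ek | [k0 nZ]].
- have sound := checkZ_sound (isT : (1 < 8)%N).
  rewrite Ek quart_comp expr0 in H'; case: H' => H1 H2.
  set z2 := zmul m Z' Z' in H1 H2; set z4 := zmul m z2 z2 in H1 H2.
  have h1 := dvd2le (isT : (2 <= 5)%N) H1.
  have h2 := dvd2le (isT : (2 <= 5)%N) H2.
  rewrite (_ : (2%N)%:Z ^+ 2 = 2 * 2) // in h1 h2.
  have hw : okd (2%N)%:Z 1 (zmul m W' W').
    rewrite /okd expr1; split; rewrite -(@dvdz_mul2l 2) //.
      by apply: (dvd_comb (s := -1) (t := - (1 - 2 * a * z2.1 + z4.1)) h1); rewrite /=; ring.
    by apply: (dvd_comb (s := -1) (t := - (- 2 * a * z2.2 + z4.2)) h2); rewrite /=; ring.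
  have [W'' [_ Ew]] := sq_half hD hw.
  rewrite Ew in H1 H2; set vv := zmul m W'' W'' in H1 H2.
  rewrite (_ : (2%N)%:Z ^+ 5 = 4 * 8) // in H1 H2.
  apply: (sound _ _ (Godd4M 0) (FaM 1) C4a m (- a) W'' Z').
    rewrite /Godd4 /all andbT; apply/andP; split.
      by move: hm; rewrite -/m; clearbody m; clear; lia.
    by move: ha; clear; lia.
  rewrite /Fa /all andbT (_ : 1%:~R = 1 :> int) //.
  apply/andP; split; rewrite -(@dvdz_mul2l 4) //.
    by apply: (dvd_comb (s := -1) (t := 0) H1); rewrite /=; ring.
  by apply: (dvd_comb (s := -1) (t := 0) H2); rewrite /=; ring.
- have sound := checkZ_sound (isT : (1 < 4)%N).
  have EX : (2 : int) ^+ k' = 2 * 2 ^+ k'.-1 by rewrite -exprS prednK.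
  rewrite EX quart_comp in H'; case: H' => H1 H2.
  set Y := 2 ^+ k'.-1 in H1 H2.
  set z2 := zmul m Z' Z' in H1 H2; set z4 := zmul m z2 z2 in H1 H2.
  set ww := zmul m W' W' in H1 H2.
  rewrite (_ : (2%N)%:Z ^+ 5 = 2 * 16) // in H1 H2.
  have g1 : (2 * 16 %| 2 * (ww.1 + 2 * z4.1))%Z.
    by apply: (dvd_comb (s := -1) (t := - (2 * Y ^+ 4 - a * Y ^+ 2 * z2.1)) H1); rewrite /=; ring.
  have g2 : (2 * 16 %| 2 * (ww.2 + 2 * z4.2))%Z.
    by apply: (dvd_comb (s := -1) (t := a * Y ^+ 2 * z2.2) H2); rewrite /=; ring.
  rewrite dvdz_mul2l // in g1; rewrite dvdz_mul2l // in g2.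
  apply: (sound _ _ Godd2M (FbM 2) C4b m 0 W' Z').
    rewrite /Godd2 /all andbT.
    move: hm; rewrite -/m; clearbody m; clear; lia.
  rewrite /Fb /all andbT (_ : 2%:~R = 2 :> int) //.
  have hn := unit_norm hD nZ.
  apply/andP; split; first by move: hn; rewrite -/m; set t := nrm _ _; clear; lia.
  apply/andP; split; apply: (dvdz_trans (_ : 4 %| 16)%Z) => //;
  first [ by apply: (dvd_comb (s := 1) (t := 0) g1); rewrite /=; ring
        | by apply: (dvd_comb (s := 1) (t := 0) g2); rewrite /=; ring ].
Qed.


Section QR.
Variable p : nat.
Hypothesis pp : prime p.
Hypothesis po : odd p.

Local Notation F := 'F_p.

Lemma Fp_dvd (x : int) : (p%:Z %| x)%Z = (x%:~R == 0 :> F).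
Proof. exact: (dvdz_pcharf (pchar_Fp pp)). Qed.

Lemma Fp_lift (x : F) : exists r : int, r%:~R = x.
Proof. by exists (val x)%:Z; exact: natr_Zp. Qed.

Lemma cardF : #|F| = p. Proof. exact: card_Fp. Qed.

Lemma size_nz : size [seq x <- enum F | x != 0] = #|F|.-1.
Proof.
rewrite -(cardC1 (0 : F)) cardE /enum_mem (@eq_filter _ (mem F) predT) // filter_predT.
by congr size; apply: eq_filter => x; rewrite inE.
Qed.

Lemma qr_exists (u d : int) : ~~ (p%:Z %| u)%Z ->
  (forall y : int, ~ (p%:Z %| y ^+ 2 - d)%Z) ->
  exists r : int, (p%:Z %| r ^+ 2 - u)%Z \/ (p%:Z %| d * r ^+ 2 - u)%Z.
Proof.
move=> nu nd.
set n := p.-1.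
have pn : p = n.+1 by rewrite /n prednK ?prime_gt0.
have n0 : (0 < n)%N by rewrite /n -ltnS prednK ?prime_gt0 ?prime_gt1.
have nev : ~~ odd n by move: po; rewrite pn /=; case: (odd n).
set rs := [seq x <- enum F | x != 0].
have unit1 (x : F) : x != 0 -> x ^+ n = 1.
  move=> x0; apply: (mulIf x0); rewrite mul1r -exprSr.
  have E := expf_card x; rewrite cardF in E.
  by rewrite (_ : n.+1 = p).
have rsn1 : all n.-unity_root rs.
  apply/allP => x; rewrite mem_filter => /andP[x0 _].
  by apply/unity_rootP; apply: unit1.
have Urs : uniq rs by rewrite filter_uniq ?enum_uniq.
have szrs : (n <= size rs)%N by rewrite size_nz cardF.
have /hasP [g _ gprim] := has_prim_root n0 rsn1 Urs szrs.
have u0 : (u%:~R : F) != 0 by rewrite -Fp_dvd.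
have d0 : (d%:~R : F) != 0.
  by rewrite -Fp_dvd; apply/negP => h; apply: (nd 0); rewrite expr0n /= add0r rpredN.
have U1 := unit1 _ u0.
have D1 := unit1 _ d0.
have [i Ei] := prim_rootP gprim U1.
case: (prim_rootP gprim D1) => j Ej.
have sq (x : F) k : ~~ odd k -> x ^+ k = (x ^+ k./2) ^+ 2.
  by move=> ek; rewrite -exprM muln2 -{1}(odd_double_half k) (negbTE ek) add0n.
case: (boolP (odd i)) => oi.
- have oj : odd j.
    apply/negPn/negP => ej; have [y Ey] := Fp_lift (g ^+ (j./2)).
    apply: (nd y); rewrite Fp_dvd rmorphB rmorphXn /= Ey Ej -(sq _ _ ej).
    by rewrite subrr.
  have jn : (j <= n)%N by apply: ltnW; case: j {Ej oj}.
  have ev : ~~ odd (n - j + i) by rewrite oddD oddB // (negbTE nev) oj oi.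
  have [r Er] := Fp_lift (g ^+ (n - j + i)./2).
  exists r; right; rewrite Fp_dvd rmorphB rmorphM rmorphXn /= Er Ej Ei -(sq _ _ ev).
  rewrite -exprD addnA subnKC //.
  by rewrite exprD (prim_expr_order gprim) mul1r subrr.
- have [r Er] := Fp_lift (g ^+ (i./2)).
  by exists r; left; rewrite Fp_dvd rmorphB rmorphXn /= Er Ei -(sq _ _ oi) subrr.
Qed.
End QR.


Lemma egcdz_eq m n : (egcdz m n).1 * m + (egcdz m n).2 * n = gcdz m n.
Proof. by case: egcdzP. Qed.

Lemma prime_odd_ndvd2 (p : nat) : prime p -> odd p -> ~~ (p%:Z %| 2)%Z.
Proof.
move=> pp po; apply/negP; rewrite dvdzE /= => h.
have le := dvdn_leq (isT : (0 < 2)%N) h.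
have gt := prime_gt1 pp.
have E : p = 2%N by lia.
by rewrite E in po.
Qed.

Lemma nonres D (p : nat) : prime p -> odd p -> D \in Dlist -> inert D p ->
  forall y : int, ~ (p%:Z %| y ^+ 2 - D)%Z.
Proof.
move=> pp po hD inD y Hy.
have [_ E4 _] := Dfacts hD.
set h : int := (p.+1./2)%:Z.
have E2h : 2 * h = p%:Z + 1.
  have := odd_double_half p.+1; rewrite /= po /= add0n -muln2 => E.
  rewrite /h; move: E; set t := p.+1./2; lia.
set s := y + 1; set x := s * h.
apply: (inD x).
have K : 4 * (x ^+ 2 - x - omega_m D) =
   (y ^+ 2 - D) + p%:Z * (2 * s ^+ 2 + p%:Z * s ^+ 2 - 2 * s).
  have -> : 4 * (x ^+ 2 - x - omega_m D) = (s * (2 * h)) ^+ 2 - 2 * (s * (2 * h)) - 4 * omega_m D.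
    by rewrite /x; ring.
  by rewrite E2h E4 /s; ring.
have : (p%:Z %| 4 * (x ^+ 2 - x - omega_m D))%Z.
  by rewrite K; apply: rpredD => //; apply: dvdz_mulr.
rewrite dvdz_primeM // => /orP[h4|] //.
have n2 := prime_odd_ndvd2 pp po.
move: h4; rewrite (_ : 4 = 2 * 2) // dvdz_primeM // orbb => h2.
by rewrite h2 in n2.
Qed.

Section Hensel.
Variables (p : nat) (a u : int).
Hypotheses (pp : prime p) (po : odd p) (na : ~~ (p%:Z %| a)%Z) (nu : ~~ (p%:Z %| u)%Z).

Definition hstep (n : nat) (r : int) : int :=
  let P := p%:Z ^+ n.+1 in
  let c := ((a * r ^+ 2 - u) %/ P)%Z in
  let x := (egcdz (2 * a * r) p).1 in
  r - c * x * P.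

Fixpoint hseq (r0 : int) (n : nat) : int :=
  if n is n'.+1 then hstep n' (hseq r0 n') else r0.

Lemma hstep_ok n r : (p%:Z ^+ n.+1 %| a * r ^+ 2 - u)%Z ->
  (p%:Z ^+ n.+2 %| a * (hstep n r) ^+ 2 - u)%Z /\ (p%:Z ^+ n.+1 %| hstep n r - r)%Z.
Proof.
move=> H; rewrite /hstep.
set P := p%:Z ^+ n.+1.
set c := ((a * r ^+ 2 - u) %/ P)%Z.
set x := (egcdz (2 * a * r) p).1; set y := (egcdz (2 * a * r) p).2.
have Ec : a * r ^+ 2 - u = c * P by rewrite /c divzK.
have nr : ~~ (p%:Z %| r)%Z.
  apply/negP => hr; move/negP: nu; apply.
  have h1 : (p%:Z %| a * r ^+ 2 - u)%Z.
    by apply: dvdz_trans H; rewrite -[X in (X %| _)%Z]expr1; exact: dvdz_exp2l.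
  have -> : u = a * r ^+ 2 - (a * r ^+ 2 - u) by ring.
  by apply: rpredB => //; rewrite expr2 mulrA dvdz_mull.
have cop : coprimez (2 * a * r) p.
  rewrite coprimez_sym coprimezE prime_coprime // -dvdzE.
  by rewrite !dvdz_primeM // (negbTE na) (negbTE nr) (negbTE (prime_odd_ndvd2 pp po)).
have Exy : x * (2 * a * r) + y * p%:Z = 1 by rewrite egcdz_eq (eqP cop).
split.
  have -> : a * (r - c * x * P) ^+ 2 - u =
     P * p%:Z * (c * y) + P * P * (a * c ^+ 2 * x ^+ 2).
    have -> : a * (r - c * x * P) ^+ 2 - u =
       (a * r ^+ 2 - u) - c * P * (x * (2 * a * r)) + P * P * (a * c ^+ 2 * x ^+ 2) by ring.
    rewrite Ec (_ : x * (2 * a * r) = 1 - y * p%:Z); last by rewrite -[in RHS]Exy addrK.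
    ring.
  apply: rpredD; first by rewrite /P -exprSr dvdz_mulr.
  apply: dvdz_mulr; rewrite /P -exprD; apply: dvdz_exp2l; lia.
have -> : r - c * x * P - r = P * (- (c * x)) by ring.
exact: dvdz_mulr.
Qed.

Lemma hensel_odd r0 : (p%:Z %| a * r0 ^+ 2 - u)%Z ->
  exists s : nat -> int, forall n,
    (p%:Z ^+ n.+1 %| a * s n ^+ 2 - u)%Z /\ (p%:Z ^+ n.+1 %| s n.+1 - s n)%Z.
Proof.
move=> H0; exists (hseq r0).
have inv : forall n, (p%:Z ^+ n.+1 %| a * hseq r0 n ^+ 2 - u)%Z.
  elim=> [|n IH]; first by rewrite expr1.
  exact: (hstep_ok IH).1.
by move=> n; split; [exact: inv | exact: (hstep_ok (inv n)).2].
Qed.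
End Hensel.

Section Hensel2.
Variables (a u : int).
Hypotheses (ha : (2 %| a - 1)%Z) (hau : (8 %| a - u)%Z).

Definition hstep2 (n : nat) (r : int) : int :=
  r + ((a * r ^+ 2 - u) %/ 2 ^+ n.+3)%Z * 2 ^+ n.+2.

Fixpoint hseq2 (n : nat) : int :=
  if n is n'.+1 then hstep2 n' (hseq2 n') else 1.

Lemma hstep2_ok n r : (2 %| r - 1)%Z -> (2 ^+ n.+3 %| a * r ^+ 2 - u)%Z ->
  [/\ (2 %| hstep2 n r - 1)%Z, (2 ^+ n.+4 %| a * (hstep2 n r) ^+ 2 - u)%Z
    & (2 ^+ n.+2 %| hstep2 n r - r)%Z].
Proof.
move=> hr H; rewrite /hstep2.
set Q : int := 2 ^+ n.+2.
set c := ((a * r ^+ 2 - u) %/ 2 ^+ n.+3)%Z.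
have Ec : a * r ^+ 2 - u = c * (2 * Q) by rewrite /Q -exprS /c divzK.
have hQ : (2 %| Q)%Z by rewrite /Q exprS dvdz_mulr.
split.
- have -> : r + c * Q - 1 = (r - 1) + Q * c by ring.
  by apply: rpredD => //; apply: dvdz_mulr.
- have -> : a * (r + c * Q) ^+ 2 - u = (2 * Q) * (c * (1 + a * r)) + Q * Q * (a * c ^+ 2).
    have -> : a * (r + c * Q) ^+ 2 - u = (a * r ^+ 2 - u) + (2 * Q) * (c * a * r) + Q * Q * (a * c ^+ 2) by ring.
    rewrite Ec; ring.
  apply: rpredD.
    rewrite (_ : 2 ^+ n.+4 = (2 * Q) * 2); last by rewrite /Q !exprS; ring.
    apply: dvdz_mul => //.
    have -> : 1 + a * r = (a - 1) * (r - 1) + (a - 1) + (r - 1) + 2 by ring.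
    apply: dvdz_mull.
    have hh := dvdz_mulr (r - 1) ha; move: hh ha hr; set t := (a - 1) * (r - 1); clear; lia.
  apply: dvdz_mulr; rewrite /Q -exprD; apply: dvdz_exp2l; lia.
- have -> : r + c * Q - r = Q * c by ring.
  by apply: dvdz_mulr; rewrite /Q.
Qed.

Lemma hensel_two : exists s : nat -> int, forall n,
    (2 ^+ n.+3 %| a * s n ^+ 2 - u)%Z /\ (2 ^+ n.+2 %| s n.+1 - s n)%Z.
Proof.
exists hseq2.
have inv : forall n, (2 %| hseq2 n - 1)%Z /\ (2 ^+ n.+3 %| a * hseq2 n ^+ 2 - u)%Z.
  elim=> [|n [IH1 IH2]]; first by split; [rewrite subrr | rewrite expr1n mulr1].
  by have [? ? _] := hstep2_ok IH1 IH2; split.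
move=> n; have [h1 h2] := inv n; split=> //.
by have [_ _ ?] := hstep2_ok h1 h2.
Qed.
End Hensel2.


Definition sqseq (D : int) (l : int) (u : int) (W : nat -> okt) :=
  (forall n, ok_cong l n (W n.+1) (W n)) /\
  (forall n, ok_cong l n (ok_mul (omega_m D) (W n) (W n)) (u, 0)).

Lemma dvd_pow_le (l x : int) (i j : nat) : (i <= j)%N -> (l ^+ j %| x)%Z -> (l ^+ i %| x)%Z.
Proof. by move=> ij; apply: dvdz_trans; apply: dvdz_exp2l. Qed.

Lemma sq_from_int D l u (a : int) (s : nat -> int) : D \in Dlist -> (a = 1 \/ a = D) ->
  (forall n, (l ^+ n %| a * s n ^+ 2 - u)%Z /\ (l ^+ n %| s n.+1 - s n)%Z) ->
  exists W, sqseq D l u W.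
Proof.
move=> hD ha H; have [_ E4 _] := Dfacts hD.
case: ha H => -> H.
- exists (fun n => (s n, 0)); split => n; have [h1 h2] := H n; split => /=.
  + exact: h2.
  + by rewrite subrr.
  + by move: h1; rewrite mul1r expr2 mulr0 addr0.
  + by rewrite !(mulr0, mul0r, addr0, subr0) dvdz0.
- exists (fun n => (- s n, 2 * s n)); split => n; have [h1 h2] := H n; split => /=.
  + by rewrite (_ : - s n.+1 - - s n = - (s n.+1 - s n)) ?rpredN //; ring.
  + by rewrite -mulrBr dvdz_mull.
  + have -> : - s n * - s n + omega_m D * (2 * s n) * (2 * s n) - u = D * s n ^+ 2 - u.
      rewrite [in RHS](_ : D = 4 * omega_m D + 1); first ring. by rewrite E4; ring.
    exact: h1.
  + have -> : - s n * (2 * s n) + 2 * s n * - s n + 2 * s n * (2 * s n) - 0 = 0 by ring.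
    by rewrite dvdz0.
Qed.

Lemma sqrt_odd D (p : nat) (u : int) : prime p -> odd p -> D \in Dlist -> inert D p ->
  ~~ (p%:Z %| u)%Z -> exists W, sqseq D p%:Z u W.
Proof.
move=> pp po hD inD nu.
have nr := nonres pp po hD inD.
have [r [Hr|Hr]] := qr_exists pp po nu nr.
- have n1 : ~~ (p%:Z %| 1)%Z by rewrite dvdz1 /=; apply/negP => /eqP e; rewrite e in pp.
  have Hr' : (p%:Z %| 1 * r ^+ 2 - u)%Z by rewrite mul1r.
  have [s Hs] := hensel_odd pp po n1 nu Hr'.
  apply: (sq_from_int (a := 1) (s := s) hD (or_introl erefl)) => n.
  have [h1 h2] := Hs n; split; apply: dvd_pow_le (leqnSn n) _ => //.
- have nD : ~~ (p%:Z %| D)%Z.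
    by apply/negP => h; apply: (nr 0); rewrite expr0n /= add0r rpredN.
  have [s Hs] := hensel_odd pp po nD nu Hr.
  apply: (sq_from_int (a := D) (s := s) hD (or_intror erefl)) => n.
  have [h1 h2] := Hs n; split; apply: dvd_pow_le (leqnSn n) _ => //.
Qed.

Lemma sqrt_two D u : D \in Dlist -> (4 %| u - 1)%Z -> exists W, sqseq D 2 u W.
Proof.
move=> hD hu; have [_ _ h8] := Dfacts hD.
case: (boolP (8 %| u - 1)%Z) => h.
- have e1 : (2 %| 1 - 1)%Z by rewrite subrr.
  have e2 : (8 %| 1 - u)%Z by move: h; clear; lia.
  have [s Hs] := @hensel_two 1 u e1 e2.
  apply: (sq_from_int (a := 1) (s := s) hD (or_introl erefl)) => n.
  have [h1 h2] := Hs n; split; apply: dvd_pow_le _ h1 || apply: dvd_pow_le _ h2; lia.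
- have e1 : (2 %| D - 1)%Z by move: h8; clear; lia.
  have e2 : (8 %| D - u)%Z by move: h8 hu h; clear; lia.
  have [s Hs] := @hensel_two D u e1 e2.
  apply: (sq_from_int (a := D) (s := s) hD (or_intror erefl)) => n.
  have [h1 h2] := Hs n; split; apply: dvd_pow_le _ h1 || apply: dvd_pow_le _ h2; lia.
Qed.

Lemma loc_build D (l : int) d A B (k : nat) (z c u : int) W : sqseq D l u W ->
  d ^+ 2 * (l ^+ k) ^+ 4 + A * d * (l ^+ k) ^+ 2 * z ^+ 2 + B * z ^+ 4 = d * c ^+ 2 * u ->
  loc_solv D l d A B.
Proof.
move=> [HW1 HW2] E.
exists k, (fun _ => (z, 0)), (fun n => ok_scale c (W n)); split.
  move=> n; split; split => /=; rewrite ?subrr ?dvdz0 //.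
    by rewrite -mulrBr; apply: dvdz_mull; case: (HW1 n).
  by rewrite -mulrBr; apply: dvdz_mull; case: (HW1 n).
move=> n; rewrite cong0 quart_comp; have [h1 h2] := HW2 n.
move: h1 h2; case: (W n) => w1 w2 /= h1 h2; rewrite !subr0 in h1 h2.
set X := l ^+ k in E *.
split => /=.
  have -> : d * ((c * w1) * (c * w1) + omega_m D * (c * w2) * (c * w2)) -
    (d ^+ 2 * X ^+ 4 + A * d * X ^+ 2 * (z * z + omega_m D * 0 * 0) +
     B * ((z * z + omega_m D * 0 * 0) * (z * z + omega_m D * 0 * 0) +
          omega_m D * (z * 0 + 0 * z + 0 * 0) * (z * 0 + 0 * z + 0 * 0)))
    = d * c ^+ 2 * (w1 * w1 + omega_m D * w2 * w2 - u) -
      (d ^+ 2 * X ^+ 4 + A * d * X ^+ 2 * z ^+ 2 + B * z ^+ 4 - d * c ^+ 2 * u) by ring.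
  by rewrite E subrr subr0; apply: dvdz_mull.
have -> : d * ((c * w1) * (c * w2) + (c * w2) * (c * w1) + (c * w2) * (c * w2)) -
    (A * d * X ^+ 2 * (z * 0 + 0 * z + 0 * 0) +
     B * ((z * z + omega_m D * 0 * 0) * (z * 0 + 0 * z + 0 * 0) +
          (z * 0 + 0 * z + 0 * 0) * (z * z + omega_m D * 0 * 0) +
          (z * 0 + 0 * z + 0 * 0) * (z * 0 + 0 * z + 0 * 0)))
    = d * c ^+ 2 * (w1 * w2 + w2 * w1 + w2 * w2) by ring.
by apply: dvdz_mull.
Qed.


Lemma inf_ok d A B : inf_solv d A B.
Proof.
exists 0, (sqrtC d%:~R); rewrite sqrtCK expr0n /= mulr0 addr0 expr0n /= mulr0 addr0.
by rewrite rmorphXn /= expr2.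
Qed.

Lemma ndvdM (l : nat) x y : prime l -> ~~ (l%:Z %| x)%Z -> ~~ (l%:Z %| y)%Z -> ~~ (l%:Z %| x * y)%Z.
Proof. by move=> pl hx hy; rewrite dvdz_primeM // negb_or hx hy. Qed.

Lemma ndvd1 (l : nat) : prime l -> ~~ (l%:Z %| 1)%Z.
Proof. by move=> pl; rewrite dvdz1 /=; apply/negP => /eqP e; rewrite e in pl. Qed.

Lemma ndvdX (l : nat) x n : prime l -> ~~ (l%:Z %| x)%Z -> ~~ (l%:Z %| x ^+ n)%Z.
Proof.
move=> pl hx; case: n => [|n]; first by rewrite expr0 ndvd1.
by apply/negP => /(dvdz_primeX pl); apply/negP.
Qed.

Lemma ndvdN1 (l : nat) : prime l -> ~~ (l%:Z %| -1)%Z.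
Proof. move=> pl; have := ndvd1 pl; by rewrite !dvdzE. Qed.


Lemma loc_odd_z0 D (l : nat) d A B : prime l -> odd l -> D \in Dlist -> inert D l ->
  ~~ (l%:Z %| d)%Z -> loc_solv D l%:Z d A B.
Proof.
move=> pl lo hD inD nd.
have [W HW] := sqrt_odd pl lo hD inD nd.
apply: (loc_build (k := 0) (z := 0) (c := 1) HW).
by rewrite !expr0n /= expr0; ring.
Qed.

Lemma ndvd_shift (l u y t : int) : ~~ (l %| y)%Z -> u = y + l * t -> ~~ (l %| u)%Z.
Proof.
move=> ny E; apply/negP => h; move/negP: ny; apply.
have -> : y = u - l * t by rewrite E; ring.
by apply: rpredB => //; apply: dvdz_mulr.
Qed.

Lemma loc_odd_gen D (l : nat) d A B (k : nat) (z u : int) : prime l -> odd l -> D \in Dlist ->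
  inert D l -> ~~ (l%:Z %| u)%Z ->
  d ^+ 2 * (l%:Z ^+ k) ^+ 4 + A * d * (l%:Z ^+ k) ^+ 2 * z ^+ 2 + B * z ^+ 4 = d * 1 ^+ 2 * u ->
  loc_solv D l%:Z d A B.
Proof.
move=> pl lo hD inD nu E.
have [W HW] := sqrt_odd pl lo hD inD nu.
exact: (loc_build HW E).
Qed.

Unset Implicit Arguments.
Theorem proposition2p5 (p q : nat) (D eps : int) :
  prime p -> prime q -> odd p -> odd q -> q = (p + 2)%N ->
  D \in [:: -11; -19; -43; -67; -163] ->
  inert D p%:Z -> inert D q%:Z ->
  (eps = 1 \/ eps = -1) ->
  [/\ (forall a b c e : bool,
         [|| c, e | ks2 p q a b c e == -1] ->
         ~ in_Sphi D eps p q (ks2 p q a b c e)),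
      (in_Sphi D eps p q 2 <-> (p %% 4 = 3)%N) /\
      (in_Sphi D eps p q (-2) <-> (p %% 4 = 1)%N),
      (forall a b c e : bool, b -> ~ in_Shat D eps p q (ks2 p q a b c e)) &
      [/\ in_Shat D eps p q (-1), in_Shat D eps p q p & in_Shat D eps p q q]].
Proof.
move=> pp qp po qo Eq hD inp inq heps.
have hD' : D \in Dlist by [].
have [hm E4 h8] := Dfacts hD'.
have in2 : inert D (2%N)%:Z := inert2 hm.
have p2 : prime 2 by [].
have EQ : q%:Z = p%:Z + 2 by rewrite Eq PoszD.
have np2 := prime_odd_ndvd2 pp po.
have nq2 := prime_odd_ndvd2 qp qo.
have npq : ~~ (p%:Z %| q%:Z)%Z.
  by rewrite dvdzE /= Eq dvdn_addr ?dvdnn //; move: np2; rewrite dvdzE.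
have nqp : ~~ (q%:Z %| p%:Z)%Z.
  rewrite dvdzE /=; apply/negP => /(dvdn_leq (prime_gt0 pp)); lia.
have np4 : ~~ (p%:Z %| (4 : int)%R)%Z.
  by rewrite (_ : (4 : int)%R = 2 * 2) // ndvdM.
have nq4 : ~~ (q%:Z %| (4 : int)%R)%Z.
  by rewrite (_ : (4 : int)%R = 2 * 2) // ndvdM.
set a' := - (eps * (p%:Z + 1)).
have EA : - (2 * eps * (p%:Z + q%:Z)) = 4 * a' by rewrite /a' EQ; ring.
have pm4 : (p %% 4 = 1)%N \/ (p %% 4 = 3)%N.
  have := odd_double_half p; rewrite po => E; move: E; set h := p./2; clearbody h.
  clear; lia.
have np2r : ~~ (p%:Z %| (2 : int)%R)%Z := np2.
have nq2r : ~~ (q%:Z %| (2 : int)%R)%Z := nq2.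
have p2o : ~~ ((2%N)%:Z %| p%:Z)%Z by rewrite dvdzE /= dvdn2 po.
have q2o : ~~ ((2%N)%:Z %| q%:Z)%Z by rewrite dvdzE /= dvdn2 qo.
split.
- move=> a b c e H.
  case: c H => [_|].
    rewrite (_ : ks2 p q a b true e = p%:Z * ((-1) ^+ a * 2 ^+ b * q%:Z ^+ e)); last first.
      by rewrite /ks2 expr1; ring.
    case=> _ _ Hp _; apply: (L1 pp inp _ np4 Hp).
    by apply: ndvdM pp (ndvdM pp (ndvdX _ pp (ndvdN1 pp)) (ndvdX _ pp np2r)) (ndvdX _ pp npq).
  case: e => [_|] /=.
    rewrite (_ : ks2 p q a b false true = q%:Z * ((-1) ^+ a * 2 ^+ b)); last first.
      by rewrite /ks2 expr1 expr0; ring.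
    case=> _ _ _ Hq; apply: (L1 qp inq _ nq4 Hq).
    by apply: ndvdM qp (ndvdX _ qp (ndvdN1 qp)) (ndvdX _ qp nq2r).
  move/eqP => ->; case=> _ H2 _ _.
  rewrite EA in H2; exact: (L2 hD' H2).
split.
  split.
  - case: pm4 => // h1 [_ H2 _ _].
    exfalso; rewrite EA in H2; apply: (L3 hD' _ H2).
    by rewrite /a'; case: heps => ->; move: h1; clear; lia.
  - move=> h3; split; first exact: inf_ok.
    + have h : (4 %| (1 + a') - 1)%Z.
        by rewrite /a'; case: heps => ->; move: h3; clear; lia.
      have [W HW] := sqrt_two hD' h.
      apply: (loc_build (k := 0) (z := 1) (c := 2) HW).
      by rewrite EA; ring.
    + by apply: loc_odd_z0.
    + by apply: loc_odd_z0.
  split.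
  - case: pm4 => // h1 [_ H2 _ _].
    exfalso; rewrite EA in H2; apply: (L4 hD' _ H2).
    by rewrite /a'; case: heps => ->; move: h1; clear; lia.
  - move=> h3; split; first exact: inf_ok.
    + have h : (4 %| (- (1 - a')) - 1)%Z.
        by rewrite /a'; case: heps => ->; move: h3; clear; lia.
      have [W HW] := sqrt_two hD' h.
      apply: (loc_build (k := 0) (z := 1) (c := 2) HW).
      by rewrite EA; ring.
    + by apply: loc_odd_z0 => //; rewrite rpredN.
    + by apply: loc_odd_z0 => //; rewrite rpredN.
- move=> a b c e; case: b => // _.
  rewrite (_ : ks2 p q a true c e = (2%N)%:Z * ((-1) ^+ a * p%:Z ^+ c * q%:Z ^+ e)); last first.
    by rewrite /ks2 expr1; ring.
  case=> _ H2 _ _; apply: (L1 p2 in2 _ _ H2).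
    by apply: ndvdM p2 (ndvdM p2 (ndvdX _ p2 (ndvdN1 p2)) (ndvdX _ p2 p2o)) (ndvdX _ p2 q2o).
  exact: ndvdM p2 p2o q2o.
have h2p : (2 %| p%:Z + 1)%Z.
  by move: p2o; rewrite dvdzE /= dvdn2 => /negbNE; clear; lia.
have hsq : (4 %| (p%:Z + 1) * (p%:Z + 1))%Z.
  by rewrite (_ : 4 = 2 * 2) //; apply: dvdz_mul.
split.
- split; first exact: inf_ok.
  + have h : (4 %| - ((2 ^+ 1) ^+ 4 - eps * (p%:Z + q%:Z) * (2 ^+ 1) ^+ 2 + p%:Z * q%:Z) - 1)%Z.
      apply: (dvd_comb (s := -1) (t := eps * (p%:Z + q%:Z) - 4) hsq).
      by rewrite EQ; ring.
    have [W HW] := sqrt_two hD' h.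
    apply: (loc_build (k := 1) (z := 1) (c := 1) HW); ring.
  + by apply: loc_odd_z0 => //; exact: ndvdN1.
  + by apply: loc_odd_z0 => //; exact: ndvdN1.
- split; first exact: inf_ok.
  + case: pm4 => h4.
    * have h : (4 %| (p%:Z + 4 * (eps * (p%:Z + q%:Z)) + 16 * q%:Z) - 1)%Z.
        by move: h4; set t := eps * _; clear; lia.
      have [W HW] := sqrt_two hD' h.
      apply: (loc_build (k := 0) (z := 2) (c := 1) HW); ring.
    * have h : (4 %| (16 * p%:Z + 4 * (eps * (p%:Z + q%:Z)) + q%:Z) - 1)%Z.
        by move: h4 EQ; set t := eps * _; clear; lia.
      have [W HW] := sqrt_two hD' h.
      apply: (loc_build (k := 1) (z := 1) (c := 1) HW); ring.
  + apply: (loc_odd_gen (k := 1) (z := 1) (u := p%:Z ^+ 5 + eps * (p%:Z + q%:Z) * p%:Z ^+ 2 + q%:Z)) => //.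
      apply: (ndvd_shift (y := q%:Z) (t := p%:Z ^+ 4 + eps * (p%:Z + q%:Z) * p%:Z) npq); ring.
    ring.
  + by apply: loc_odd_z0.
- split; first exact: inf_ok.
  + case: pm4 => h4.
    * have h : (4 %| (16 * q%:Z + 4 * (eps * (p%:Z + q%:Z)) + p%:Z) - 1)%Z.
        by move: h4; set t := eps * _; clear; lia.
      have [W HW] := sqrt_two hD' h.
      apply: (loc_build (k := 1) (z := 1) (c := 1) HW); ring.
    * have h : (4 %| (q%:Z + 4 * (eps * (p%:Z + q%:Z)) + 16 * p%:Z) - 1)%Z.
        by move: h4 EQ; set t := eps * _; clear; lia.
      have [W HW] := sqrt_two hD' h.
      apply: (loc_build (k := 0) (z := 2) (c := 1) HW); ring.
  + by apply: loc_odd_z0.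
  + apply: (loc_odd_gen (k := 1) (z := 1) (u := q%:Z ^+ 5 + eps * (p%:Z + q%:Z) * q%:Z ^+ 2 + p%:Z)) => //.
      apply: (ndvd_shift (y := p%:Z) (t := q%:Z ^+ 4 + eps * (p%:Z + q%:Z) * q%:Z) nqp); ring.
    ring.
Qed.
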